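(* Let $T$ be a Grothendieck topology on a category $\mathscr{C}$, and let $\mathrm{Uni}(T)$ denote the singleton Grothendieck topology whose coverings are all universal $T$-locally split morphisms. Then: (a) $\mathrm{Uni}(T)\sim T$; in particular every Grothendieck topology is equivalent to a singleton one. (b) For Grothendieck topologies $T_1,T_2$ on $\mathscr{C}$: $T_1\prec T_2$ if and only if $\mathrm{Uni}(T_1)\subset\mathrm{Uni}(T_2)$, and $T_1\sim T_2$ if and only if $\mathrm{Uni}(T_1)=\mathrm{Uni}(T_2)$. (c) If $T$ is singleton, then $T\subset\mathrm{Uni}(T)$. (d) $\mathrm{Uni}(\mathrm{Uni}(T))=\mathrm{Uni}(T)$.
   Context: A Grothendieck topology $T$ on $\mathscr{C}$ assigns to each object $X$ a set of families $(\pi_i:U_i\to X)_{i\in I}$ (''coverings'') such that isomorphisms form singleton coverings, coverings of members of a covering compose to coverings, and coverings pull back (pullbacks existing) along arbitrary morphisms to coverings. It is singleton if all coverings have a one-element index set. A morphism is universal if its pullback along every morphism exists. A morphism $\pi:Y\to X$ is $T$-locally split if there is a covering $(\pi_i:U_i\to X)$ and morphisms $\rho_i:U_i\to Y$ with $\pi\circ\rho_i=\pi_i$. $T_1\prec T_2$ means every universal $T_1$-locally split morphism is $T_2$-locally split; $T_1\sim T_2$ means both $T_1\prec T_2$ and $T_2\prec T_1$. $T_1\subset T_2$ means every $T_1$-covering is a $T_2$-covering. *)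

(* Defs.v *)
Set Implicit Arguments.
Unset Strict Implicit.

Record Category := {
  Ob : Type;
  Hom : Ob -> Ob -> Type;
  comp : forall {X Y Z : Ob}, Hom Y Z -> Hom X Y -> Hom X Z;
  idm : forall X : Ob, Hom X X;
  comp_assoc : forall (W X Y Z : Ob) (h : Hom Y Z) (g : Hom X Y) (f : Hom W X),
      comp h (comp g f) = comp (comp h g) f;
  comp_id_l : forall (X Y : Ob) (f : Hom X Y), comp (idm Y) f = f;
  comp_id_r : forall (X Y : Ob) (f : Hom X Y), comp f (idm X) = f
}.

Arguments comp {c X Y Z} _ _.
Arguments idm {c} X.
Arguments Hom c _ _ : clear implicits.
Arguments Ob c : clear implicits.

Section Topologies.
Variable C : Category.

Record Fam (X : Ob C) := {
  idx : Type;
  fdom : idx -> Ob C;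
  farr : forall i : idx, Hom C (fdom i) X
}.
Arguments idx {X} f.
Arguments fdom {X} f i.
Arguments farr {X} f i.

Definition is_iso (X Y : Ob C) (f : Hom C Y X) : Prop :=
  exists g : Hom C X Y, comp f g = idm X /\ comp g f = idm Y.

Definition is_pullback (X Y Z : Ob C) (f : Hom C Y X) (g : Hom C Z X)
    (P : Ob C) (p1 : Hom C P Y) (p2 : Hom C P Z) : Prop :=
  comp f p1 = comp g p2 /\
  forall (Q : Ob C) (q1 : Hom C Q Y) (q2 : Hom C Q Z),
    comp f q1 = comp g q2 ->
    exists! u : Hom C Q P, comp p1 u = q1 /\ comp p2 u = q2.

Definition Coverings := forall X : Ob C, Fam X -> Prop.

Definition single_fam (X Y : Ob C) (f : Hom C Y X) : Fam X :=
  {| idx := unit; fdom := fun _ => Y; farr := fun _ => f |}.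

Definition comp_fam (X : Ob C) (F : Fam X)
    (G : forall i : idx F, Fam (fdom F i)) : Fam X :=
  {| idx := { i : idx F & idx (G i) };
     fdom := fun ij => fdom (G (projT1 ij)) (projT2 ij);
     farr := fun ij => comp (farr F (projT1 ij)) (farr (G (projT1 ij)) (projT2 ij)) |}.

Definition is_GT (T : Coverings) : Prop :=
  (forall (X Y : Ob C) (f : Hom C Y X), is_iso f -> T X (single_fam f)) /\
  (forall (X : Ob C) (F : Fam X) (G : forall i : idx F, Fam (fdom F i)),
      T X F -> (forall i, T (fdom F i) (G i)) -> T X (comp_fam G)) /\
  (forall (X : Ob C) (F : Fam X), T X F ->
     forall (Y : Ob C) (g : Hom C Y X),
       (forall i : idx F, exists (P : Ob C) (p1 : Hom C P (fdom F i)) (p2 : Hom C P Y),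
            is_pullback (farr F i) g p1 p2) /\
       (forall (P : idx F -> Ob C) (p1 : forall i, Hom C (P i) (fdom F i))
               (p2 : forall i, Hom C (P i) Y),
          (forall i, is_pullback (farr F i) g (p1 i) (p2 i)) ->
          T Y {| idx := idx F; fdom := P; farr := p2 |})).

Definition one_element (I : Type) : Prop := exists i0 : I, forall j : I, j = i0.

Definition is_singleton (T : Coverings) : Prop :=
  forall (X : Ob C) (F : Fam X), T X F -> one_element (idx F).

Definition universal (X Y : Ob C) (pi : Hom C Y X) : Prop :=
  forall (Z : Ob C) (g : Hom C Z X),
    exists (P : Ob C) (p1 : Hom C P Y) (p2 : Hom C P Z), is_pullback pi g p1 p2.

Definition locally_split (T : Coverings) (X Y : Ob C) (pi : Hom C Y X) : Prop :=
  exists F : Fam X, T X F /\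
    forall i : idx F, exists rho : Hom C (fdom F i) Y, comp pi rho = farr F i.

Definition prec (T1 T2 : Coverings) : Prop :=
  forall (X Y : Ob C) (pi : Hom C Y X),
    universal pi -> locally_split T1 pi -> locally_split T2 pi.

Definition tequiv (T1 T2 : Coverings) : Prop := prec T1 T2 /\ prec T2 T1.

Definition tsub (T1 T2 : Coverings) : Prop :=
  forall (X : Ob C) (F : Fam X), T1 X F -> T2 X F.

Definition teq (T1 T2 : Coverings) : Prop := tsub T1 T2 /\ tsub T2 T1.

Definition Uni (T : Coverings) : Coverings :=
  fun X F => one_element (idx F) /\
             forall i : idx F, universal (farr F i) /\ locally_split T (farr F i).

End Topologies.

(* Main.v *)
Require Import Defs.
From Stdlib Require Import ClassicalEpsilon.

Section Helpers.
Variable C : Category.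

Lemma dchoice (I : Type) (A : I -> Type) (R : forall i, A i -> Prop) :
  (forall i, exists a, R i a) -> exists f : forall i, A i, forall i, R i (f i).
Proof.
  intros H. exists (fun i => proj1_sig (constructive_indefinite_description _ (H i))).
  intro i. exact (proj2_sig (constructive_indefinite_description _ (H i))).
Qed.

Lemma pb_choice (X : Ob C) (F : Fam X) (Y : Ob C) (g : Hom C Y X) :
  (forall i, exists (P : Ob C) (p1 : Hom C P (fdom (f:=F) i)) (p2 : Hom C P Y),
      is_pullback (farr (f:=F) i) g p1 p2) ->
  exists (P : idx F -> Ob C) (p1 : forall i, Hom C (P i) (fdom (f:=F) i))
         (p2 : forall i, Hom C (P i) Y), forall i, is_pullback (farr (f:=F) i) g (p1 i) (p2 i).
Proof.
  intros H.
  destruct (@dchoice _ (fun i => {P : Ob C & (Hom C P (fdom (f:=F) i) * Hom C P Y)%type})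
     (fun i a => is_pullback (farr (f:=F) i) g (fst (projT2 a)) (snd (projT2 a)))) as [f Hf].
  { intro i. destruct (H i) as (P & p1 & p2 & Hp). exists (existT _ P (p1, p2)). exact Hp. }
  exists (fun i => projT1 (f i)), (fun i => fst (projT2 (f i))), (fun i => snd (projT2 (f i))).
  exact Hf.
Qed.

Lemma pb_universal (X Y Z : Ob C) (f : Hom C Y X) (g : Hom C Z X) (P : Ob C)
  (p1 : Hom C P Y) (p2 : Hom C P Z) : universal f -> is_pullback f g p1 p2 -> universal p2.
Proof.
  intros Uf [Hc Hu] Q h.
  destruct (Uf Q (comp g h)) as (R & r1 & r2 & [Rc Ru]).
  destruct (Hu R r1 (comp h r2)) as (u & [Hu1 Hu2] & _).
  { rewrite Rc; apply eq_sym, comp_assoc. }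
  exists R, u, r2. split. exact Hu2.
  intros S a b Hab.
  assert (E : comp f (comp p1 a) = comp (comp g h) b).
  { rewrite comp_assoc, Hc, <- comp_assoc, Hab, comp_assoc. reflexivity. }
  destruct (Ru S (comp p1 a) b E) as (v & [Hv1 Hv2] & Hvu).
  exists v. split; [split|].
  - assert (E2 : comp f (comp p1 a) = comp g (comp p2 a)).
    { rewrite !comp_assoc, Hc. reflexivity. }
    destruct (Hu S (comp p1 a) (comp p2 a) E2) as (w & _ & Hw).
    transitivity w; [symmetry|]; apply Hw; split; try reflexivity.
    + rewrite comp_assoc, Hu1. exact Hv1.
    + rewrite comp_assoc, Hu2, <- comp_assoc, Hv2. symmetry; exact Hab.
  - exact Hv2.
  - intros v' [H1 H2]. apply Hvu. split; [|exact H2].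
    rewrite <- H1, comp_assoc, Hu1. reflexivity.
Qed.

Lemma comp_universal (X Y Z : Ob C) (f : Hom C Y X) (g : Hom C Z Y) :
  universal f -> universal g -> universal (comp f g).
Proof.
  intros Uf Ug Q h.
  destruct (Uf Q h) as (P & p1 & p2 & [Pc Pu]).
  destruct (Ug P p1) as (R & r1 & r2 & [Rc Ru]).
  exists R, r1, (comp p2 r2). split.
  { rewrite <- comp_assoc, Rc, !comp_assoc, Pc. reflexivity. }
  intros S a b Hab.
  destruct (Pu S (comp g a) b) as (c & [Hc1 Hc2] & Hcu).
  { rewrite comp_assoc. exact Hab. }
  destruct (Ru S a c) as (d & [Hd1 Hd2] & Hdu).
  { symmetry; exact Hc1. }
  exists d. split; [split|].
  - exact Hd1.
  - rewrite <- comp_assoc, Hd2. exact Hc2.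
  - intros d' [H1 H2]. apply Hdu. split; [exact H1|].
    symmetry. apply Hcu. split.
    + rewrite comp_assoc, <- Rc, <- comp_assoc, H1. reflexivity.
    + rewrite comp_assoc. exact H2.
Qed.

Lemma iso_universal (X Y : Ob C) (f : Hom C Y X) : is_iso f -> universal f.
Proof.
  intros [k [Hk1 Hk2]] Z h.
  exists Z, (comp k h), (idm Z). split.
  { rewrite comp_assoc, Hk1, comp_id_l, comp_id_r. reflexivity. }
  intros S a b Hab. exists b. split; [split|].
  - rewrite <- comp_assoc, <- Hab, comp_assoc, Hk2, comp_id_l. reflexivity.
  - apply comp_id_l.
  - intros u [_ H2]. rewrite <- H2, comp_id_l. reflexivity.
Qed.

Lemma ls_comp (T : Coverings C) (X Y Z : Ob C) (f : Hom C Y X) (g : Hom C Z Y) :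
  is_GT T -> locally_split T f -> locally_split T g -> locally_split T (comp f g).
Proof.
  intros (Hiso & Hcomp & Hpb) [F [HF Hr]] [G [HG Hs]].
  destruct (@dchoice _ (fun k => Fam (fdom (f:=F) k))
    (fun k H => T _ H /\ forall l, exists s : Hom C (fdom (f:=H) l) Z,
         comp (comp f g) s = comp (farr (f:=F) k) (farr (f:=H) l))) as [Hf HHf].
  { intro k. destruct (Hr k) as [rho Hrho].
    destruct (Hpb Y G HG (fdom (f:=F) k) rho) as [Ex St].
    destruct (pb_choice _ _ _ _ Ex) as (P & q1 & q2 & Hq).
    exists {| idx := idx G; fdom := P; farr := q2 |}. split.
    - apply St with (p1 := q1). exact Hq.
    - intro l. simpl. destruct (Hs l) as [sig Hsig].
      exists (comp sig (q1 l)).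
      rewrite <- comp_assoc, (comp_assoc g), Hsig.
      destruct (Hq l) as [Hql _]. rewrite Hql, comp_assoc, Hrho. reflexivity. }
  exists (comp_fam Hf). split.
  - apply Hcomp. exact HF. intro i. apply HHf.
  - intros [k l]. simpl. apply (proj2 (HHf k)).
Qed.

Lemma ls_pb (T : Coverings C) (X Y Z : Ob C) (f : Hom C Y X) (g : Hom C Z X) (P : Ob C)
  (p1 : Hom C P Y) (p2 : Hom C P Z) :
  is_GT T -> locally_split T f -> is_pullback f g p1 p2 -> locally_split T p2.
Proof.
  intros (Hiso & Hcomp & Hpb) [F [HF Hr]] [Pc Pu].
  destruct (Hpb X F HF Z g) as [Ex St].
  destruct (pb_choice _ _ _ _ Ex) as (W & q1 & q2 & Hq).
  exists {| idx := idx F; fdom := W; farr := q2 |}. split.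
  - apply St with (p1 := q1). exact Hq.
  - intro k. simpl. destruct (Hr k) as [rho Hrho].
    destruct (Pu (W k) (comp rho (q1 k)) (q2 k)) as (u & [Hu1 Hu2] & _).
    { rewrite comp_assoc, Hrho. apply (proj1 (Hq k)). }
    exists u. exact Hu2.
Qed.

Lemma prec_Uni_T (T : Coverings C) : prec (Uni T) T.
Proof.
  intros X Y pi _ [F [[[i0 Hi0] HF] Hr]].
  destruct (HF i0) as [_ [G [HG Hs]]]. destruct (Hr i0) as [rho Hrho].
  exists G. split; [exact HG|]. intro l. destruct (Hs l) as [s Hs'].
  exists (comp rho s). rewrite comp_assoc, Hrho. exact Hs'.
Qed.

Lemma prec_T_Uni (T : Coverings C) : prec T (Uni T).
Proof.
  intros X Y pi Upi Lpi. exists (single_fam pi). split.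
  - split. exists tt. intros []. reflexivity. intros i. simpl. split; assumption.
  - intros i. exists (idm Y). apply comp_id_r.
Qed.

Lemma GT_Uni (T : Coverings C) : is_GT T -> is_GT (Uni T).
Proof.
  intros HT. pose proof HT as (Hiso & Hcomp & Hpb). split; [|split].
  - intros X Y f Hf. split. exists tt. intros []. reflexivity.
    intros i. simpl. split. apply iso_universal; exact Hf.
    exists (single_fam f). split. apply Hiso; exact Hf.
    intros i'. exists (idm Y). apply comp_id_r.
  - intros X F G [[i0 Hi0] HF] HG. split.
    + destruct (HG i0) as [[j0 Hj0] _]. exists (existT _ i0 j0).
      intros [i j]. pose proof (Hi0 i) as E. subst i. rewrite (Hj0 j). reflexivity.
    + intros [i j]. simpl. destruct (HF i) as [U1 L1]. destruct (HG i) as [_ HGi].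
      destruct (HGi j) as [U2 L2]. split.
      * apply comp_universal; assumption.
      * apply ls_comp; assumption.
  - intros X F [oneF HF] Y g. split.
    + intro i. apply (proj1 (HF i)).
    + intros P p1 p2 Hp. split. exact oneF.
      intro i. simpl. destruct (HF i) as [U L]. split.
      * eapply pb_universal; [exact U| exact (Hp i)].
      * eapply ls_pb; [exact HT| exact L| exact (Hp i)].
Qed.

End Helpers.

Theorem mainTheorem8 (C : Category) :
  (* (a) *)
  (forall T : Coverings C, is_GT T ->
     (is_GT (Uni T) /\ is_singleton (Uni T)) /\
     tequiv (Uni T) T /\
     (exists T' : Coverings C, is_GT T' /\ is_singleton T' /\ tequiv T T')) /\
  (* (b) *)
  (forall T1 T2 : Coverings C, is_GT T1 -> is_GT T2 ->
     (prec T1 T2 <-> tsub (Uni T1) (Uni T2)) /\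
     (tequiv T1 T2 <-> teq (Uni T1) (Uni T2))) /\
  (* (c) *)
  (forall T : Coverings C, is_GT T -> is_singleton T -> tsub T (Uni T)) /\
  (* (d) *)
  (forall T : Coverings C, is_GT T -> teq (Uni (Uni T)) (Uni T)).
Proof.
  assert (Hsing : forall T : Coverings C, is_singleton (Uni T)).
  { intros T X F [H _]. exact H. }
  assert (Hb1 : forall T1 T2 : Coverings C, prec T1 T2 <-> tsub (Uni T1) (Uni T2)).
  { intros T1 T2. split.
    - intros Hp X F [Ho HF]. split; [exact Ho|]. intro i. destruct (HF i) as [U L].
      split; [exact U|]. apply Hp; assumption.
    - intros Hs X Y pi U L.
      assert (H : Uni T1 (single_fam pi)).
      { split. exists tt. intros []. reflexivity. intros i. split; assumption. }
      apply Hs in H. destruct H as [_ H]. exact (proj2 (H tt)). }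
  split; [|split; [|split]].
  - intros T HT. split; [split; [apply GT_Uni; exact HT| apply Hsing]|].
    split. split; [apply prec_Uni_T| apply prec_T_Uni].
    exists (Uni T). split; [apply GT_Uni; exact HT|]. split; [apply Hsing|].
    split; [apply prec_T_Uni| apply prec_Uni_T].
  - intros T1 T2 _ _. split. apply Hb1.
    unfold tequiv, teq. rewrite !Hb1. tauto.
  - intros T HT Hs X F HF. pose proof (Hs X F HF) as [i0 Hi0].
    split. exists i0. exact Hi0.
    intro i. split.
    + intros Z g. exact (proj1 (proj2 (proj2 HT) X F HF Z g) i).
    + exists F. split; [exact HF|]. intro j. rewrite (Hi0 j), (Hi0 i).
      exists (idm _). apply comp_id_r.
  - intros T _. split.
    + intros X F [Ho HF]. split; [exact Ho|]. intro i. destruct (HF i) as [U L].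
      split; [exact U|]. apply (prec_Uni_T _ T); assumption.
    + intros X F [Ho HF]. split; [exact Ho|]. intro i. destruct (HF i) as [U L].
      split; [exact U|]. apply (prec_T_Uni _ T); assumption.
Qed.
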